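(* For all $G,H\subseteq A$ and every $\varphi\in\mathcal{L}_{CoRGAL}$, the formula $\langle[G]\rangle\langle[H]\rangle\varphi\rightarrow[\langle A\setminus(G\cup H)\rangle]\varphi$ is valid.
   Context: Fix a finite set $A$ of agents and a countable set $P$ of propositional variables. The language $\mathcal{L}_{CoRGAL}$ is given by $\varphi ::= p \mid \neg\varphi \mid (\varphi\wedge\varphi) \mid K_a\varphi \mid [\varphi]\varphi \mid [G,\varphi]\varphi \mid [\langle G\rangle]\varphi$ with $p\in P$, $a\in A$, $G\subseteq A$. $\mathcal{L}_{EL}$ is the fragment built only from $p,\neg,\wedge,K_a$. Duals: $\langle\psi\rangle\varphi:=\neg[\psi]\neg\varphi$, $\langle[G]\rangle\varphi:=\neg[\langle G\rangle]\neg\varphi$. For $G\subseteq A$, $\mathcal{L}^G_{EL}$ is the set of formulas $\bigwedge_{i\in G}K_i\varphi_i$ with each $\varphi_i\in\mathcal{L}_{EL}$; $\psi_G,\chi_G$ range over $\mathcal{L}^G_{EL}$. Epistemic models $M=(W,\sim,V)$: $W\neq\emptyset$, each $\sim_a$ an equivalence relation, $V:P\to\mathcal{P}(W)$; $M^\varphi$ is the restriction of $M$ to $\{v:(M,v)\models\varphi\}$. Semantics: standard for $p,\neg,\wedge,K_a$; $(M,w)\models[\varphi]\psi$ iff $(M,w)\models\varphi$ implies $(M^\varphi,w)\models\psi$; $(M,w)\models[G,\chi]\varphi$ iff $(M,w)\models\chi$ and for all $\psi_G$, $(M,w)\models[\psi_G\wedge\chi]\varphi$; $(M,w)\models[\langle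 G\rangle]\varphi$ iff for every $\psi_G$ there is $\chi_{A\setminus G}$ with $(M,w)\models\psi_G\to\langle\psi_G\wedge\chi_{A\setminus G}\rangle\varphi$. Thus $(M,w)\models\langle[G]\rangle\varphi$ iff there is $\psi_G$ such that for all $\chi_{A\setminus G}$, $(M,w)\models\psi_G\wedge[\psi_G\wedge\chi_{A\setminus G}]\varphi$. A formula is valid if true at every pointed model. *)

(* Defs.v *)
From mathcomp Require Import all_boot.
Set Implicit Arguments. Unset Strict Implicit. Unset Printing Implicit Defensive.

Section CoRGAL.
Variable A : finType.

Inductive elform : Type :=
| EVar : nat -> elform
| ENot : elform -> elform
| EAnd : elform -> elform -> elform
| EK   : A -> elform -> elform.

Inductive form : Type :=
| Var  : nat -> form
| Not  : form -> form
| And  : form -> form -> form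
| K    : A -> form -> form
| Ann  : form -> form -> form
| RGA  : {set A} -> form -> form -> form
| Coal : {set A} -> form -> form.

Fixpoint emb (f : elform) : form :=
  match f with
  | EVar p => Var p | ENot f => Not (emb f) | EAnd f g => And (emb f) (emb g)
  | EK a f => K a (emb f)
  end.

Definition ETop : elform := ENot (EAnd (EVar 0) (ENot (EVar 0))).

Definition conjK (G : {set A}) (phis : A -> elform) : elform :=
  match enum G with
  | [::] => ETop
  | i :: s => foldl (fun acc j => EAnd acc (EK j (phis j))) (EK i (phis i)) s
  end.

Record model : Type := Model {
  W : Type;
  W_inh : inhabited W;
  rel : A -> W -> W -> Prop;
  val : nat -> W -> Prop;
  rel_refl : forall a w, rel a w w;
  rel_sym : forall a w v, rel a w v -> rel a v w;
  rel_trans : forall a u v w, rel a u v -> rel a v w -> rel a u w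
}.

(* Satisfaction in the submodel of M with domain D (restrictions M^phi are
   represented by their sets of worlds). *)
Fixpoint satEL (M : model) (D : W M -> Prop) (w : W M) (f : elform) : Prop :=
  match f with
  | EVar p => val p w
  | ENot f => ~ satEL D w f
  | EAnd f g => satEL D w f /\ satEL D w g
  | EK a f => forall v, D v -> rel a w v -> satEL D v f
  end.

Fixpoint sat (M : model) (D : W M -> Prop) (w : W M) (f : form) : Prop :=
  match f with
  | Var p => val p w
  | Not f => ~ sat D w f
  | And f g => sat D w f /\ sat D w g
  | K a f => forall v, D v -> rel a w v -> sat D v f
  | Ann f g => sat D w f -> sat (fun v => D v /\ sat D v f) w g
  | RGA G chi f =>
      sat D w chi /\
      forall phis : A -> elform,
        let psi := conjK G phis in
        (satEL D w psi /\ sat D w chi) ->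
        sat (fun v => D v /\ (satEL D v psi /\ sat D v chi)) w f
  | Coal G f =>
      forall phis : A -> elform,
        let psi := conjK G phis in
        exists chis : A -> elform,
          let chi := conjK (~: G) chis in
          satEL D w psi ->
          (satEL D w psi /\ satEL D w chi) /\
          sat (fun v => D v /\ (satEL D v psi /\ satEL D v chi)) w f
  end.

Definition Imp (f g : form) : form := Not (And f (Not g)).
(* <[G]> phi := ~ [<G>] ~ phi *)
Definition DiaCoal (G : {set A}) (f : form) : form := Not (Coal G (Not f)).

Definition valid (f : form) : Prop :=
  forall (M : model) (w : W M), sat (fun _ => True) w f.

Lemma sat_emb (M : model) (D : W M -> Prop) (w : W M) (f : elform) :
  sat D w (emb f) <-> satEL D w f.
Proof.
elim: f w => [p|f IH|f IHf g IHg|a f IH] w /=.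
- by [].
- by split=> H1 H2; apply: H1; apply/IH.
- by split=> -[H1 H2]; split; [apply/IHf|apply/IHg|apply/IHf|apply/IHg].
- by split=> H v Dv Rv; apply/IH; apply: H.
Qed.

End CoRGAL.

(* Main.v *)
Require Import Defs.
From mathcomp Require Import all_boot.
From Stdlib Require Import Classical FunctionalExtensionality PropExtensionality.
Set Implicit Arguments. Unset Strict Implicit.

Section Aux.
Variable A : finType.
Variable M : model A.

Lemma satEL_foldl (D : W M -> Prop) (phis : A -> elform A) (s : seq A) acc w :
  satEL D w (foldl (fun acc j => EAnd acc (EK j (phis j))) acc s) <->
  satEL D w acc /\ forall i, i \in s -> forall v, D v -> Defs.rel i w v -> satEL D v (phis i).
Proof.
elim: s acc => [|j s IH] acc /=.
  by split=> [H|[H _]] //; split.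
rewrite IH /=; split.
  move=> [[Ha Hj] Hs]; split=> // i; rewrite in_cons => /orP[/eqP->|Hi] //.
  exact: Hs.
move=> [Ha Hs]; split; first split=> //.
  by apply: Hs; rewrite in_cons eqxx.
by move=> i Hi; apply: Hs; rewrite in_cons Hi orbT.
Qed.

Lemma satEL_conjK (D : W M -> Prop) w (G : {set A}) phis :
  satEL D w (conjK G phis) <->
  forall i, i \in G -> forall v, D v -> Defs.rel i w v -> satEL D v (phis i).
Proof.
rewrite /conjK.
have E : forall i, (i \in G) = (i \in enum G) by move=> i; rewrite mem_enum.
case: (enum G) E => [|j s] E.
  split=> [_ i|_]; first by rewrite E.
  by move=> /= [H1 H2].
rewrite satEL_foldl /=; split.
  move=> [Hj Hs] i; rewrite E in_cons => /orP[/eqP->|Hi] //; exact: Hs.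
move=> H; split; first by apply: H; rewrite E in_cons eqxx.
by move=> i Hi; apply: H; rewrite E in_cons Hi orbT.
Qed.

Definition EImp (d g : elform A) : elform A := ENot (EAnd d (ENot g)).

Fixpoint relEL (d : elform A) (f : elform A) : elform A :=
  match f with
  | EVar p => EVar A p
  | ENot f => ENot (relEL d f)
  | EAnd f g => EAnd (relEL d f) (relEL d g)
  | EK a f => EK a (EImp d (relEL d f))
  end.

Lemma relEL_ok (D : W M -> Prop) d f w :
  satEL (fun v => D v /\ satEL D v d) w f <-> satEL D w (relEL d f).
Proof.
elim: f w => [p|f IH|f IHf g IHg|a f IH] w /=.
- by [].
- by rewrite IH.
- by rewrite IHf IHg.
- split.
    move=> H v Dv Rv [Hd Hn]; apply: Hn; apply/IH; exact: H.
  move=> H v [Dv Hd] Rv; apply/IH; apply: NNPP => Hn; exact: (H v Dv Rv).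
Qed.

Lemma ETop_true (D : W M -> Prop) w : satEL D w (ETop A).
Proof. by move=> /= [H1 H2]. Qed.

End Aux.

Theorem mainTheorem6 (A : finType) (G H : {set A}) (phi : form A) :
  valid (Imp (DiaCoal G (DiaCoal H phi)) (Coal (~: (G :|: H)) phi)).
Proof.
move=> M w /= [HX HY]; apply: HY => phis2.
case: (classic (satEL (fun _ : W M => True) w (conjK (~: (G :|: H)) phis2)))
  => Hpsi2; last by exists phis2 => /= Hc; exfalso; exact: Hpsi2.
have [phisG HG] := not_all_ex_not _ _ HX.
set chis1 := fun i : A => if i \in G :|: H then ETop A else phis2 i.
have HG1 := not_ex_all_not _ _ HG chis1.
simpl in HG1.
set psiG := conjK G phisG in HG1 *.
set chi1 := conjK (~: G) chis1 in HG1 *.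
set T := fun _ : W M => True.
have chi1E : forall v, satEL T v chi1 <-> satEL T v (conjK (~: (G :|: H)) phis2).
  move=> v; rewrite !satEL_conjK; split=> Hc i Hi u Tu Ru.
    have Hi' : i \in ~: G by move: Hi; rewrite !inE negb_or => /andP[].
    have := Hc i Hi' u Tu Ru; rewrite /chis1.
    by move: Hi; rewrite !inE => /negbTE ->.
  rewrite /chis1; case: ifP => Hin; first exact: ETop_true.
  by apply: Hc => //; rewrite inE Hin.
have [HpsiG Hrest] : satEL T w psiG /\
   ~ ((satEL T w psiG /\ satEL T w chi1) /\ ~ ~ sat (fun v => T v /\ (satEL T v psiG /\ satEL T v chi1)) w (Coal H (Not phi))).
  apply: NNPP => Hn; apply: HG1 => Hp; apply: NNPP => Hq; apply: Hn; split=> //; exact: Hq.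
have Hchi1 : satEL T w chi1 by apply/chi1E.
have HnC : ~ sat (fun v => T v /\ (satEL T v psiG /\ satEL T v chi1)) w (Coal H (Not phi)).
  by move=> HC; apply: Hrest; split=> // HH; apply: HH; exact: HC.
set d := EAnd psiG chi1.
set D1 := fun v => T v /\ (satEL T v psiG /\ satEL T v chi1).
have [phisH HH] := not_all_ex_not _ _ HnC.
have HH1 := not_ex_all_not _ _ HH (fun _ => ETop A).
simpl in HH1.
set psiH := conjK H phisH in HH1 *.
set chi' := conjK (~: H) (fun _ => ETop A) in HH1 *.
have Hchi' : forall v, satEL D1 v chi'.
  by move=> v; apply/satEL_conjK => i _ u _ _; apply: ETop_true.
have [HpsiH Hphi] : satEL D1 w psiH /\
   sat (fun v => D1 v /\ (satEL D1 v psiH /\ satEL D1 v chi')) w phi.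
  apply: NNPP => Hn; apply: HH1 => Hp; split; first by split.
  by move=> Hnp; apply: Hn; split.
pose chis := fun i : A =>
  EAnd (if i \in G then phisG i else ETop A)
       (if i \in H then EImp d (relEL d (phisH i)) else ETop A).
exists chis => /= _.
have chiE : forall v, satEL T v (conjK (~: (~: (G :|: H))) chis) <->
   satEL T v psiG /\ satEL D1 v psiH.
  move=> v; rewrite satEL_conjK /psiG /psiH !satEL_conjK; split.
    move=> Hc; split=> i Hi u Du Ru.
      have Hi' : i \in ~: ~: (G :|: H) by rewrite setCK inE Hi.
      have := Hc i Hi' u Du Ru.
      by rewrite /chis Hi => -[].
    have Hi' : i \in ~: ~: (G :|: H) by rewrite setCK inE Hi orbT.
    have := Hc i Hi' u I Ru.
    rewrite /chis Hi => -[_] /= Hi2.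
    apply/(@relEL_ok _ _ T d); apply: NNPP => Hn; apply: Hi2; split => //.
    by case: Du.
  move=> [H1 H2] i Hi u Tu Ru; rewrite /chis; split.
    by case: ifP => Hg; [exact: H1 | exact: ETop_true].
  case: ifP => Hh; last exact: ETop_true.
  move=> /= [Hd Hn]; apply: Hn; apply/(@relEL_ok _ _ T d).
  apply: H2 => //.
have DE : (fun v => T v /\ (satEL T v (conjK (~: (G :|: H)) phis2) /\
            satEL T v (conjK (~: (~: (G :|: H))) chis))) =
          (fun v => D1 v /\ (satEL D1 v psiH /\ satEL D1 v chi')).
  apply: functional_extensionality => v; apply: propositional_extensionality.
  rewrite chiE -chi1E /D1; split.
    by move=> [_ [Hc [Hg Hh]]]; split; [split|split].
  by move=> [[_ [Hg Hc]] [Hh _]].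
split; first split=> //; first by apply/chiE.
by rewrite DE.
Qed.
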